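(* Let $E: y^2=x^3+Ax^2+Bx$ ($A,B\in\mathbb{Z}$) with $E(\mathbb{Q})[2]\simeq\mathbb{Z}/2\mathbb{Z}$, let $d$ be squarefree and $p$ a prime with $p\mid d$ and $\gcd(p,2\Delta)=1$. Then $$W_p^d=\begin{cases}\langle d(A+2\sqrt{B})\rangle & \text{if } p \text{ is of type 1},\\ 1 & \text{if } p \text{ is of type 2},\\ \mathbb{Q}_p^\times/(\mathbb{Q}_p^\times)^2 & \text{if } p \text{ is of type 3},\\ \mathbb{Z}_p^\times/(\mathbb{Z}_p^\times)^2 & \text{if } p \text{ is of type 4}.\end{cases}$$
   Context: $\Delta$ is the discriminant of $E$ and $\Delta'$ that of $E': y^2=x^3-2Ax^2+(A^2-4B)x$ (up to squares $\Delta\equiv A^2-4B$, $\Delta'\equiv B$). $\phi:E\to E'$ is the 2-isogeny with kernel $\langle(0,0)\rangle$, $E^d,E'^d$ the quadratic twists by $d$, and $W_p^d=\kappa_p(E'^d(\mathbb{Q}_p)/\phi(E^d(\mathbb{Q}_p)))\subset\mathbb{Q}_p^\times/(\mathbb{Q}_p^\times)^2$ is the image of the local Kummer map. For a prime $p\nmid 2\Delta$: $p$ is of type 1 if $(\Delta/p)=1,(\Delta'/p)=1$; type 2 if $(\Delta/p)=1,(\Delta'/p)=-1$; type 3 if $(\Delta/p)=-1,(\Delta'/p)=1$; type 4 if $(\Delta/p)=-1,(\Delta'/p)=-1$. In type 1, $\sqrt{B}\in\mathbb{Q}_p$. *)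

(* Defs.v *)
From mathcomp Require Import all_boot all_order all_algebra.
Set Implicit Arguments. Unset Strict Implicit. Unset Printing Implicit Defensive.
Import Order.TTheory GRing.Theory Num.Theory.
Local Open Scope ring_scope.

Definition disc (A B : int) : int := 16 * B ^+ 2 * (A ^+ 2 - 4 * B).
(* discriminant of E' : y^2 = x^3 - 2A x^2 + (A^2 - 4B) x *)
Definition disc' (A B : int) : int := 256 * B * (A ^+ 2 - 4 * B) ^+ 2.

(* E(Q)[2] = Z/2Z : the only rational root of x^3 + A x^2 + B x is x = 0,
   i.e. (0,0) is the only rational point of order 2. *)
Definition two_torsion_Z2 (A B : int) : Prop :=
  forall x : rat, x ^+ 3 + A%:~R * x ^+ 2 + B%:~R * x = 0 -> x = 0.

Definition squarefree_int (d : int) : Prop :=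
  d != 0 /\ forall m : nat, (m ^ 2 %| `|d|)%N -> m = 1%N.

Definition legendre_one (p : nat) (a : int) : Prop :=
  ~~ (p%:Z %| a)%Z /\ exists x : int, (p%:Z %| x ^+ 2 - a)%Z.

Definition type1 p A B := legendre_one p (disc A B) /\ legendre_one p (disc' A B).
Definition type2 p A B := legendre_one p (disc A B) /\ ~ legendre_one p (disc' A B).
Definition type3 p A B := ~ legendre_one p (disc A B) /\ legendre_one p (disc' A B).
Definition type4 p A B := ~ legendre_one p (disc A B) /\ ~ legendre_one p (disc' A B).

(* [vge v M z] : v(z) >= M, with the convention v(0) = +oo *)
Definition vge (K : fieldType) (v : K -> int) (M : int) (z : K) : Prop :=
  z = 0 \/ M <= v z.

(* (K, v) is the field Q_p of p-adic numbers with its normalized valuation: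
   a complete discretely valued field of characteristic 0 in which p is a
   uniformizer and whose residue field is F_p.  These properties characterize
   Q_p up to unique isomorphism. *)
Definition is_Qp (p : nat) (K : fieldType) (v : K -> int) : Prop :=
  [/\ (forall n : nat, n.+1%:R != 0 :> K),
      (forall x y : K, x != 0 -> y != 0 -> v (x * y) = v x + v y),
      (forall x y : K, x != 0 -> y != 0 -> x + y != 0 ->
        Num.min (v x) (v y) <= v (x + y)),
      v p%:R = 1 /\
      (forall x : K, x != 0 -> 0 <= v x -> exists n : nat, vge v 1 (x - n%:R)) &
      forall u : nat -> K,
        (forall M : int, exists N : nat, forall n m : nat,
            (N <= n)%N -> (N <= m)%N -> vge v M (u n - u m)) ->
        exists l : K, forall M : int, exists N : nat, forall n : nat,
            (N <= n)%N -> vge v M (u n - l)].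

Definition sqclass (K : fieldType) (x y : K) : Prop :=
  exists z : K, z != 0 /\ x = y * z ^+ 2.

(* E'^d : y^2 = x^3 - 2dA x^2 + d^2 (A^2 - 4B) x ; points are None (= O)
   or Some (x, y) affine. *)
Definition on_Edual (K : fieldType) (A B d : int) (P : option (K * K)) : Prop :=
  match P with
  | None => True
  | Some (x, y) => y ^+ 2 = x ^+ 3 - 2 * (d * A)%:~R * x ^+ 2
                            + (d ^+ 2 * (A ^+ 2 - 4 * B))%:~R * x
  end.

(* kappa : E'^d(K) -> K^x/(K^x)^2 (connecting map of the 2-isogeny
   phi : E^d -> E'^d, given by O |-> 1, (0,0) |-> d^2(A^2-4B), (x,y) |-> x) *)
Definition kummer (K : fieldType) (A B d : int) (P : option (K * K)) : K :=
  match P with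
  | None => 1
  | Some (x, y) => if x == 0 then (d ^+ 2 * (A ^+ 2 - 4 * B))%:~R else x
  end.

(* the class of x lies in W_p^d = kappa(E'^d(Q_p)/phi(E^d(Q_p))) *)
Definition in_W (K : fieldType) (A B d : int) (x : K) : Prop :=
  exists P : option (K * K), on_Edual A B d P /\ sqclass x (kummer A B d P).

(* Main.v *)
Require Import Defs.
From mathcomp Require Import all_boot all_order all_algebra all_fingroup all_solvable all_field.
From mathcomp Require Import zify ring.
From Stdlib Require Import Classical.
Set Implicit Arguments. Unset Strict Implicit. Unset Printing Implicit Defensive.
Import Order.TTheory GRing.Theory Num.Theory.
Local Open Scope ring_scope.

Lemma ff_sq (F : finFieldType) (a b : F) : a != 0 -> b != 0 ->
  ~ (exists y, y ^+ 2 = a) -> ~ (exists y, y ^+ 2 = b) -> exists y, y ^+ 2 = a * b.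
Proof.
move=> a0 b0 na nb.
have [g Hg] := cyclicP (field_unit_group_cyclic [set: {unit F}]%G).
have ex (c : F) : c != 0 -> exists i, c = (FinRing.uval g) ^+ i.
  move=> c0; have cu : c \is a GRing.unit by rewrite unitfE.
  have : (FinRing.Unit cu) \in <[g]>%g by rewrite -Hg inE.
  case/cycleP=> i Hi; exists i.
  by rewrite -FinRing.val_unitX -Hi.
have [i ai] := ex a a0; have [j bj] := ex b b0; subst a b.
have oi : odd i.
  case ei: (odd i) => //; exfalso; apply: na; exists (FinRing.uval g ^+ i./2).
  by rewrite -exprM muln2 halfK ei subn0.
have oj : odd j.
  case ej: (odd j) => //; exfalso; apply: nb; exists (FinRing.uval g ^+ j./2).
  by rewrite -exprM muln2 halfK ej subn0.
exists (FinRing.uval g ^+ (i + j)./2).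
by rewrite -exprM -exprD muln2 halfK oddD oi oj subn0.
Qed.

Lemma Fp_int_eq0 p (z : int) : prime p -> ((z%:~R : 'F_p) == 0) = (p%:Z %| z)%Z.
Proof.
move=> pp; case: z => n.
  by rewrite /= -(dvdn_pcharf (pchar_Fp pp)).
rewrite NegzE mulrNz oppr_eq0 dvdzE abszN /=.
by rewrite -(dvdn_pcharf (pchar_Fp pp)).
Qed.

Lemma leg_Fp p (a : int) : prime p ->
  legendre_one p a <-> ((a%:~R : 'F_p) != 0 /\ exists y : 'F_p, y ^+ 2 = a%:~R).
Proof.
move=> pp; split.
  case=> na [x hx]; split; first by rewrite Fp_int_eq0.
  exists (x%:~R); apply/eqP; rewrite -subr_eq0 -rmorphXn -rmorphB /=.
  by rewrite Fp_int_eq0.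
case=> na [y hy]; split; first by rewrite -Fp_int_eq0.
exists (nat_of_ord y)%:Z; rewrite -Fp_int_eq0 // rmorphB /= rmorphXn /= -hy.
have -> : ((nat_of_ord y)%:Z%:~R : 'F_p) = y by rewrite -[RHS]natr_Zp.
by rewrite subrr.
Qed.

Lemma nonsq_mul p (a b : int) : prime p -> ~~ (p%:Z %| a)%Z -> ~~ (p%:Z %| b)%Z ->
  ~ legendre_one p a -> ~ legendre_one p b -> legendre_one p (a * b).
Proof.
move=> pp pa pb la lb.
have a0 : (a%:~R : 'F_p) != 0 by rewrite Fp_int_eq0.
have b0 : (b%:~R : 'F_p) != 0 by rewrite Fp_int_eq0.
apply/(leg_Fp _ pp); rewrite rmorphM /=; split; first by rewrite mulf_neq0.
apply: ff_sq => //.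
  by case=> y hy; apply: la; apply/(leg_Fp _ pp); split => //; exists y.
by case=> y hy; apply: lb; apply/(leg_Fp _ pp); split => //; exists y.
Qed.

Lemma onE (K : fieldType) (A B d : int) (x y : K) :
  on_Edual A B d (Some (x, y)) <->
  y ^+ 2 = x ^+ 3 - 2 * (d%:~R * A%:~R) * x ^+ 2 + (d%:~R ^+ 2 * (A%:~R ^+ 2 - 4 * B%:~R)) * x.
Proof.
rewrite /on_Edual !intrM !rmorphB /= !rmorphXn /= intrM.
done.
Qed.
Lemma kumE (K : fieldType) (A B d : int) (y : K) :
  kummer A B d (Some (0, y)) = d%:~R ^+ 2 * (A%:~R ^+ 2 - 4 * B%:~R).
Proof. by rewrite /kummer eqxx intrM rmorphB /= !rmorphXn /= intrM. Qed.
Section Sq.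
Variable K : fieldType.
Implicit Types x y z : K.
Lemma sq_refl x : sqclass x x.
Proof. by exists 1; rewrite oner_neq0 expr1n mulr1. Qed.
Lemma sq_eq x y : x = y -> sqclass x y.
Proof. by move=> ->; apply: sq_refl. Qed.
Lemma sq_trans x y w : sqclass x y -> sqclass y w -> sqclass x w.
Proof.
move=> [z1 [z10 ->]] [z2 [z20 ->]]; exists (z2 * z1); split; first by rewrite mulf_neq0.
by rewrite exprMn; ring.
Qed.
Lemma sq_sym x y : sqclass x y -> sqclass y x.
Proof.
move=> [z [z0 ->]]; exists z^-1; split; first by rewrite invr_eq0.
by rewrite -mulrA -exprMn mulfV // expr1n mulr1.
Qed.
Lemma sq_mul x x' y y' : sqclass x x' -> sqclass y y' -> sqclass (x * y) (x' * y').
Proof.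
move=> [z1 [z10 ->]] [z2 [z20 ->]]; exists (z1 * z2); split; first by rewrite mulf_neq0.
by rewrite exprMn; ring.
Qed.
Lemma sq_sq x z : z != 0 -> sqclass (x * z ^+ 2) x.
Proof. by move=> z0; exists z. Qed.
Lemma sq_sq1 z w : z != 0 -> z ^+ 2 = w -> sqclass w 1.
Proof. by move=> z0 <-; exists z; rewrite mul1r. Qed.
End Sq.

Lemma i2z (k : int) : 0 = 2%:Z * k -> k = 0.
Proof. lia. Qed.

Section Val.
Variables (A B d : int) (p : nat) (K : fieldType) (v : K -> int).
Hypotheses (pp : prime p) (HQ : is_Qp p v) (hpd : (p%:Z %| d)%Z)
  (sqf : squarefree_int d) (cop : coprime p `|(2 * disc A B)%R|%N).

Lemma char0 n : n.+1%:R != 0 :> K. Proof. by case: HQ => h _ _ _ _; apply: h. Qed.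
Lemma vM x y : x != 0 -> y != 0 -> v (x * y) = v x + v y. Proof. by case: HQ => _ h _ _ _; apply: h. Qed.
Lemma vD x y : x != 0 -> y != 0 -> x + y != 0 -> Num.min (v x) (v y) <= v (x + y).
Proof. by case: HQ => _ _ h _ _; apply: h. Qed.
Lemma vp : v p%:R = 1. Proof. by case: HQ => _ _ _ [h _] _. Qed.
Lemma resid0 x : x != 0 -> 0 <= v x -> exists n : nat, vge v 1 (x - n%:R).
Proof. by case: HQ => _ _ _ [_ h] _; apply: h. Qed.

Lemma vge0 M : vge v M 0. Proof. by left. Qed.
Lemma vgeW M N x : N <= M -> vge v M x -> vge v N x.
Proof. by move=> NM [->|h]; [left|right; apply: le_trans h]. Qed.
Lemma vgeD M x y : vge v M x -> vge v M y -> vge v M (x + y).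
Proof.
move=> [->|hx]; first by rewrite add0r.
move=> [->|hy]; first by rewrite addr0; right.
have [x0|x0] := eqVneq x 0; first by rewrite x0 add0r; right.
have [y0|y0] := eqVneq y 0; first by rewrite y0 addr0; right.
have [s0|s0] := eqVneq (x + y) 0; first by left.
right; apply: le_trans (vD x0 y0 s0); by rewrite le_min hx hy.
Qed.
Lemma v1 : v 1 = 0.
Proof. have := vM (oner_neq0 K) (oner_neq0 K); rewrite mulr1; move: (v 1) => a; lia. Qed.
Lemma vN1 : v (-1) = 0.
Proof.
have n1 : (-1 : K) != 0 by rewrite oppr_eq0 oner_neq0.
have := vM n1 n1; rewrite mulrNN mulr1 v1; lia.
Qed.
Lemma vN x : x != 0 -> v (- x) = v x.
Proof.
move=> x0; have n1 : (-1 : K) != 0 by rewrite oppr_eq0 oner_neq0.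
by rewrite -mulN1r vM // vN1 add0r.
Qed.
Lemma vgeN M x : vge v M x -> vge v M (- x).
Proof.
move=> [->|h]; first by rewrite oppr0; left.
have [x0|x0] := eqVneq x 0; first by rewrite x0 oppr0; left.
by right; rewrite vN.
Qed.
Lemma vgeB M x y : vge v M x -> vge v M y -> vge v M (x - y).
Proof. by move=> hx hy; apply: vgeD => //; apply: vgeN. Qed.
Lemma vgeM M N x y : vge v M x -> vge v N y -> vge v (M + N) (x * y).
Proof.
move=> [->|hx]; first by rewrite mul0r; left.
move=> [->|hy]; first by rewrite mulr0; left.
have [x0|x0] := eqVneq x 0; first by rewrite x0 mul0r; left.
have [y0|y0] := eqVneq y 0; first by rewrite y0 mulr0; left.
by right; rewrite vM //; apply: lerD.
Qed.
Lemma vV x : x != 0 -> v (x^-1) = - v x.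
Proof.
move=> x0; have := vM x0 (invr_neq0 x0); rewrite mulfV // v1; lia.
Qed.
Lemma vX x n : x != 0 -> v (x ^+ n) = n%:Z * v x.
Proof.
move=> x0; elim: n => [|n IH]; first by rewrite expr0 v1 mul0r.
rewrite exprS vM ?expf_neq0 // IH; lia.
Qed.
Lemma vge_v x : x != 0 -> vge v (v x) x. Proof. by right. Qed.
Lemma vge_nz M x : x != 0 -> vge v M x -> M <= v x.
Proof. by move=> x0 [h|h] //; rewrite h eqxx in x0. Qed.
Lemma vge_unit x : x != 0 -> v x = 0 -> vge v 0 x.
Proof. by move=> x0 h; right; rewrite h. Qed.

Lemma natr_nz n : (n != 0)%N -> n%:R != 0 :> K.
Proof. by case: n => // n _; apply: char0. Qed.
Lemma intr_nz (z : int) : z != 0 -> z%:~R != 0 :> K.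
Proof.
case: z => n.
  by move=> h; apply: natr_nz; move: h; apply: contra => /eqP ->.
by move=> _; rewrite NegzE mulrNz oppr_eq0; exact: (char0 n).
Qed.
Lemma vge_nat n : vge v 0 (n%:R : K).
Proof.
elim: n => [|n IH]; first by left.
by rewrite -addn1 natrD; apply: vgeD => //; right; rewrite v1.
Qed.
Lemma vge_int (z : int) : vge v 0 (z%:~R : K).
Proof. case: z => n; first exact: vge_nat. by rewrite NegzE mulrNz; apply: vgeN; apply: vge_nat. Qed.
Lemma vge_p : vge v 1 (p%:R : K). Proof. by right; rewrite vp. Qed.
Lemma vge_dvd (z : int) : (p%:Z %| z)%Z -> vge v 1 (z%:~R : K).
Proof.
move=> /divzK <-; rewrite intrM.
have -> : (p%:Z%:~R : K) = p%:R by [].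
by rewrite -[1]add0r; apply: vgeM; [apply: vge_int | apply: vge_p].
Qed.
Lemma unit_int (z : int) : ~~ (p%:Z %| z)%Z -> (z%:~R : K) != 0 /\ v (z%:~R) = 0.
Proof.
move=> nd.
have z0 : z != 0 by apply: contra nd => /eqP ->; rewrite dvdz0.
have zK := intr_nz z0; split => //.
have cp : coprimez p z by rewrite coprimezE /= prime_coprime.
have [u [w huw]] := Bezoutz p z.
move: cp; rewrite /coprimez => /eqP g1; rewrite g1 in huw.
have h0 := vge_nz zK (vge_int z).
apply/eqP; rewrite eq_le h0 andbT; rewrite leNgt; apply/negP => h1.
have : vge v 1 (1 : K).
  have -> : (1 : K) = (u * p%:Z + w * z)%:~R by rewrite huw.
  rewrite intrD !intrM; apply: vgeD.
    by rewrite -[1]add0r; apply: vgeM; [apply: vge_int | apply: vge_p].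
  by rewrite -[1]add0r; apply: vgeM; [apply: vge_int | right].
move=> /(vge_nz (oner_neq0 K)); rewrite v1.
by [].
Qed.
Lemma vge1_dvd (z : int) : vge v 1 (z%:~R : K) -> (p%:Z %| z)%Z.
Proof.
move=> h; apply/negPn/negP => nd; have [z0 vz] := unit_int nd.
by have := vge_nz z0 h; rewrite vz.
Qed.

Lemma compl (u : nat -> K) :
  (forall M : int, exists N : nat, forall n m : nat,
      (N <= n)%N -> (N <= m)%N -> vge v M (u n - u m)) ->
  exists l : K, forall M : int, exists N : nat, forall n : nat,
      (N <= n)%N -> vge v M (u n - l).
Proof. by case: HQ => _ _ _ _ h; apply: h. Qed.

Lemma vge_unitM M x c : vge v M x -> c != 0 -> v c = 0 -> vge v M (x * c).
Proof. by move=> hx c0 vc; rewrite -[M]addr0; apply: vgeM => //; right; rewrite vc. Qed.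

Lemma unit_close a b : a != 0 -> v a = 0 -> vge v 1 (b - a) -> b != 0 /\ v b = 0.
Proof.
move=> a0 va hb.
have hb0 : vge v 0 b.
  have -> : b = a + (b - a) by rewrite addrC subrK.
  by apply: vgeD; [right; rewrite va | apply: (vgeW _ hb)].
have b0 : b != 0.
  apply/negP => /eqP b0; move: hb; rewrite b0 sub0r => /vgeN; rewrite opprK.
  by move=> /(vge_nz a0); rewrite va.
split => //; apply/eqP; rewrite eq_le (vge_nz b0 hb0) andbT leNgt; apply/negP => h.
have : vge v 1 a.
  have -> : a = b - (b - a) by rewrite opprB addrC subrK.
  by apply: vgeB => //; right.
by move=> /(vge_nz a0); rewrite va.
Qed.

Lemma p2 : ~~ (p%:Z %| 2)%Z.
Proof.
move: cop; rewrite abszM coprimeMr => /andP [h _].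
by rewrite dvdzE /= -prime_coprime.
Qed.

Lemma two_unit : (2 : K) != 0 /\ v 2 = 0.
Proof. exact: (unit_int p2). Qed.

Fixpoint newt (u a : K) (n : nat) : K :=
  if n is m.+1 then let z := newt u a m in (z + u / z) / 2 else a.

Lemma newt_inv u a : a != 0 -> v a = 0 -> vge v 1 (u - a ^+ 2) -> forall n,
  let z := newt u a n in
  [/\ z != 0, v z = 0, vge v (n%:Z + 1) (z ^+ 2 - u) & vge v 1 (z - a)].
Proof.
move=> a0 va ha; have [t0 vt] := two_unit.
elim=> [|n [z0 vz hz hza]] /=.
  split => //; last by rewrite subrr; left.
  by rewrite add0r -opprB; apply: vgeN.
set z := newt u a n in z0 vz hz hza *.
set w := (2 * z)^-1.
have w0 : w != 0 by rewrite invr_eq0 mulf_neq0.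
have vw : v w = 0 by rewrite vV ?mulf_neq0 // vM // vt vz addr0 oppr0.
have e1 : ((z + u / z) / 2) ^+ 2 - u = (z ^+ 2 - u) * (z ^+ 2 - u) * (w * w).
  by rewrite /w; field; apply/andP.
have e2 : (z + u / z) / 2 - z = (u - z ^+ 2) * w.
  by rewrite /w; field; apply/andP.
have hd : vge v (n%:Z + 1) ((z + u / z) / 2 - z).
  rewrite e2; apply: vge_unitM => //; rewrite -opprB; exact: vgeN.
have hza' : vge v 1 ((z + u / z) / 2 - a).
  have -> : (z + u / z) / 2 - a = ((z + u / z) / 2 - z) + (z - a) by rewrite addrA subrK.
  apply: vgeD => //; apply: vgeW hd; lia.
have [z'0 vz'] := unit_close a0 va hza'.
split => //.
rewrite e1; apply: vge_unitM; rewrite ?mulf_neq0 ?vM // ?vw //.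
apply: vgeW (vgeM hz hz); lia.
Qed.

Lemma newt_step u a : a != 0 -> v a = 0 -> vge v 1 (u - a ^+ 2) -> forall n,
  vge v (n%:Z + 1) (newt u a n.+1 - newt u a n).
Proof.
move=> a0 va ha n; have [t0 vt] := two_unit.
have [z0 vz hz _] := newt_inv a0 va ha n.
rewrite /=; set z := newt u a n in z0 vz hz *.
set w := (2 * z)^-1.
have w0 : w != 0 by rewrite invr_eq0 mulf_neq0.
have vw : v w = 0 by rewrite vV ?mulf_neq0 // vM // vt vz addr0 oppr0.
have e2 : (z + u / z) / 2 - z = (u - z ^+ 2) * w.
  by rewrite /w; field; apply/andP.
rewrite e2; apply: vge_unitM => //; rewrite -opprB; exact: vgeN.
Qed.

Lemma hensel u a : a != 0 -> v a = 0 -> vge v 1 (u - a ^+ 2) -> exists z, z ^+ 2 = u.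
Proof.
move=> a0 va ha.
have inv := newt_inv a0 va ha.
have st := newt_step a0 va ha.
have cl : forall n k, vge v (n%:Z + 1) (newt u a (n + k) - newt u a n).
  move=> n; elim=> [|k IH]; first by rewrite addn0 subrr; left.
  have -> : newt u a (n + k.+1) - newt u a n =
     (newt u a (n + k).+1 - newt u a (n + k)) + (newt u a (n + k) - newt u a n).
    by rewrite addnS addrA subrK.
  apply: vgeD => //; apply: vgeW (st _); lia.
have [l hl] : exists l : K, forall M : int, exists N : nat, forall n : nat,
      (N <= n)%N -> vge v M (newt u a n - l).
  apply: compl => M; exists `|M|%N => n m hn hm.
  have := cl `|M|%N (n - `|M|)%N; rewrite subnKC // => h1.
  have := cl `|M|%N (m - `|M|)%N; rewrite subnKC // => h2.
  have -> : newt u a n - newt u a m =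
     (newt u a n - newt u a `|M|) - (newt u a m - newt u a `|M|).
    by rewrite opprB addrA subrK.
  apply: vgeW (vgeB h1 h2); lia.
exists l; apply/eqP; rewrite -subr_eq0; apply/negP => /negP ne.
set e := l ^+ 2 - u in ne.
have [N hN] := hl (`|v e|%N%:Z + 1).
set n := maxn N `|v e|.+1.
have hn := hN n (leq_maxl _ _).
have hn2 : (`|v e|.+1 <= n)%N by apply: leq_maxr.
have [z0 vz hz _] := inv n.
set z := newt u a n in hn z0 vz hz.
have [t0 vt] := two_unit.
have ee : e = (l - z) * (l + z) + (z ^+ 2 - u) by rewrite /e; ring.
have h1 : vge v (`|v e|%N%:Z + 1) (l - z) by rewrite -opprB; apply: vgeN.
have h2 : vge v 0 (l + z).
  have -> : l + z = (l - z) + 2 * z by ring.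
  apply: vgeD; first by apply: vgeW h1; lia.
  by right; rewrite vM // vt vz.
have h3 : vge v (`|v e|%N%:Z + 1) e.
  rewrite [X in vge _ _ X]ee; apply: vgeD.
    by have := vgeM h1 h2; rewrite addr0.
  by apply: vgeW hz; lia.
have := vge_nz ne h3; move: (v e) => k; lia.
Qed.


Local Notation a := (A%:~R : K).
Local Notation b := (B%:~R : K).
Local Notation dd := (d%:~R : K).
Local Notation c := (a ^+ 2 - 4 * b).



Lemma pdisc : ~~ (p%:Z %| disc A B)%Z.
Proof.
move: cop; rewrite abszM coprimeMr => /andP [_ h].
by rewrite dvdzE /= -prime_coprime.
Qed.

Lemma discE : ((disc A B)%:~R : K) = 16 * b ^+ 2 * c.
Proof. by rewrite /disc !intrM rmorphB /= !rmorphXn /= intrM. Qed.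
Lemma disc'E : ((disc' A B)%:~R : K) = 2 ^+ 8 * b * c ^+ 2.
Proof.
rewrite /disc' !intrM rmorphB /= rmorphXn /= intrM -expr2.
by congr (_ * _ * _); rewrite -natrX.
Qed.

Lemma ub : b != 0 /\ v b = 0.
Proof.
apply: (unit_int); apply: contra pdisc => h; rewrite /disc.
by apply: dvdz_mulr; apply: dvdz_mull; rewrite expr2; apply: dvdz_mulr.
Qed.

Lemma uc : c != 0 /\ v c = 0.
Proof.
have -> : c = (A ^+ 2 - 4 * B)%:~R by rewrite rmorphB /= rmorphXn /= intrM.
apply: (unit_int); apply: contra pdisc => h; rewrite /disc.
exact: dvdz_mull.
Qed.

Lemma u2 : (2 : K) != 0 /\ v 2 = 0.
Proof. exact: (two_unit). Qed.

Lemma ud : dd != 0 /\ v dd = 1.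
Proof.
have de := divzK hpd; set e := (d %/ p)%Z in de.
have pe : ~~ (p%:Z %| e)%Z.
  apply/negP => /divzK he.
  have : (p ^ 2 %| `|d|)%N.
    rewrite -de -he abszM abszM /= -mulnA dvdn_mull //.
  case: sqf => _ /[apply] p1; by move: pp; rewrite p1.
have [e0 ve] := unit_int pe.
have -> : dd = e%:~R * p%:R by rewrite -de intrM.
have p0 : (p%:R : K) != 0 by apply: (natr_nz); rewrite -lt0n prime_gt0.
by rewrite mulf_neq0 // (vM) // ve (vp) add0r.
Qed.



Lemma close g t : g != 0 -> v g = 0 -> vge v 1 (t - g) -> sqclass t g.
Proof.
move=> g0 vg h.
set w := (t - g) * g^-1.
have hw : vge v 1 w by apply: (vge_unitM) => //; rewrite ?invr_eq0 // (vV) // vg oppr0.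
have h1 : vge v 1 ((1 + w) - 1 ^+ 2) by rewrite expr1n addrC addKr.
have [z hz] := hensel (oner_neq0 K) (v1) h1.
have h1' : vge v 1 ((1 + w) - 1) by rewrite addrC addKr.
have [nz _] := unit_close (oner_neq0 K) v1 h1'.
exists z; split.
  by apply: contra nz => /eqP z0; rewrite -hz z0 expr0n.
by rewrite hz /w; field.
Qed.

Lemma leg_sq z : legendre_one p z -> exists t : K, [/\ t != 0, v t = 0 & t ^+ 2 = z%:~R].
Proof.
case=> nz [x hx].
have px : ~~ (p%:Z %| x)%Z.
  apply: contra nz => h.
  have h2 : (p%:Z %| x ^+ 2)%Z by rewrite expr2; apply: dvdz_mulr.
  have := rpredB h2 hx; by rewrite opprB addrC subrK.
have [x0 vx] := unit_int px.
have [z0 vz] := unit_int nz.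
have h : vge v 1 (z%:~R - x%:~R ^+ 2 : K).
  rewrite -opprB; apply: (vgeN).
  by have := vge_dvd hx; rewrite rmorphB /= rmorphXn.
have [t ht] := hensel x0 vx h.
have t0 : t != 0 by apply: contra z0 => /eqP t0; rewrite -ht t0 expr0n.
exists t; split => //.
by apply: i2z; rewrite -vz -ht vX.
Qed.

Lemma leg_back (z : int) (m : K) : ~~ (p%:Z %| z)%Z -> vge v 0 m ->
  vge v 1 (m ^+ 2 - z%:~R) -> legendre_one p z.
Proof.
move=> nz hm h; split => //.
have [m0|m0] := eqVneq m 0.
  move: h; rewrite m0 expr0n sub0r => /(vgeN); rewrite opprK.
  by move/(vge1_dvd) => hz; rewrite hz in nz.
have [n hn] := resid0 m0 (vge_nz m0 hm).
exists n%:Z; apply: (vge1_dvd).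
rewrite rmorphB /= rmorphXn /=.
have -> : (n%:Z%:~R : K) ^+ 2 - z%:~R = (m ^+ 2 - z%:~R) - (m - n%:R) * (m + n%:R).
  rewrite [_%:~R]/=; ring.
apply: (vgeB) => //; rewrite -[1]addr0; apply: (vgeM) => //.
by apply: (vgeD) => //; apply: (vge_nat).
Qed.


Lemma four0 : (4 : K) != 0.
Proof. have [t0 _] := u2; have -> : (4 : K) = 2 * 2 by rewrite -natrM. exact: mulf_neq0. Qed.

Lemma unit_cls (u : K) : u != 0 -> v u = 0 -> ~ legendre_one p (disc A B) ->
  sqclass u 1 \/ sqclass u c.
Proof.
move=> u0 vu nl.
have vu0 : 0 <= v u by rewrite vu.
have [n hn] := resid0 u0 vu0.
have pn : ~~ (p%:Z %| n%:Z)%Z.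
  apply/negP => h; have hn' := vge_dvd h.
  have : vge v 1 u.
    have -> : u = (u - n%:R) + n%:R by rewrite subrK.
    exact: vgeD.
  by move/(vge_nz u0); rewrite vu.
have [b0 _] := ub; have [c0 _] := uc; have [t20 _] := u2.
have [dK0 _] := unit_int pdisc.
case: (classic (legendre_one p n%:Z)) => [ln|nln].
  have [t [t0 vt ht]] := leg_sq ln.
  have h : vge v 1 (u - t ^+ 2) by rewrite ht.
  have [z hz] := hensel t0 vt h.
  left; apply: (sq_sq1 (z := z)) => //.
  by apply: contra u0 => /eqP z0; rewrite -hz z0 expr0n.
right.
have l2 := nonsq_mul pp pn pdisc nln nl.
have [t [t0 vt ht]] := leg_sq l2.
have h : vge v 1 (u * (disc A B)%:~R - t ^+ 2).
  rewrite ht intrM.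
  have -> : ((n%:Z)%:~R : K) = n%:R by [].
  have -> : u * (disc A B)%:~R - n%:R * (disc A B)%:~R = (u - n%:R) * (disc A B)%:~R by ring.
  rewrite -[1]addr0; apply: vgeM => //; exact: vge_int.
have [z hz] := hensel t0 vt h.
have z0 : z != 0.
  by apply/negP => /eqP z0; move: hz; rewrite z0 expr0n => /esym /eqP; rewrite mulf_eq0 (negbTE u0) (negbTE dK0).
exists (z / (4 * b * c)); split.
  by rewrite mulf_neq0 // invr_eq0 !mulf_neq0 // four0.
rewrite expr_div_n hz discE; field.
by rewrite c0 b0 four0.
Qed.

Lemma c_sq : legendre_one p (disc A B) -> sqclass c 1.
Proof.
move=> l; have [t [t0 _ ht]] := leg_sq l.
have [b0 _] := ub; have [c0 _] := uc.
exists (t / (4 * b)); split; first by rewrite mulf_neq0 // invr_eq0 mulf_neq0 // four0.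
rewrite mul1r expr_div_n ht discE; field.
by rewrite b0 four0.
Qed.

Lemma b_sq : legendre_one p (disc' A B) -> exists s : K, s ^+ 2 = b.
Proof.
move=> l; have [t [t0 _ ht]] := leg_sq l.
have [b0 _] := ub; have [c0 _] := uc; have [t20 _] := u2.
exists (t / (2 ^+ 4 * c)).
rewrite expr_div_n ht disc'E; field.
by rewrite c0; apply: natr_nz.
Qed.

Lemma no_b_sq : ~ legendre_one p (disc' A B) -> forall m : K, vge v 0 m ->
  ~ vge v 1 (m ^+ 2 - 4 * b).
Proof.
move=> nl m hm h; apply: nl.
have [b0 vb] := ub; have [c0 vc] := uc; have [t20 vt2] := u2.
have pd : ~~ (p%:Z %| disc' A B)%Z.
  apply/negP => /vge_dvd; rewrite disc'E.
  have e0 : 2 ^+ 8 * b * c ^+ 2 != 0 by rewrite !mulf_neq0 ?expf_neq0.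
  by move/(vge_nz e0); rewrite !vM ?mulf_neq0 ?expf_neq0 // vt2 vb vc !addr0.
apply: (leg_back (m := 2 ^+ 3 * c * m)) => //.
  rewrite -[0]addr0; apply: vgeM => //; rewrite -[0]addr0; apply: vgeM.
    by right; rewrite vX // vt2 mulr0.
  by right; rewrite vc.
rewrite disc'E.
have -> : (2 ^+ 3 * c * m) ^+ 2 - 2 ^+ 8 * b * c ^+ 2 = (2 ^+ 6 * c ^+ 2) * (m ^+ 2 - 4 * b).
  by ring.
rewrite -[1]add0r; apply: vgeM => //.
by right; rewrite vM ?expf_neq0 // !vX // vt2 vc !mulr0 addr0.
Qed.

Lemma fwd P : on_Edual A B d P ->
  [\/ sqclass (kummer A B d P) 1, sqclass (kummer A B d P) c,
      exists2 s' : K, s' ^+ 2 = b & kummer A B d P = dd * (a + 2 * s')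
    | exists t : K, [/\ t != 0, v t = 0, vge v 1 ((t - a) ^+ 2 - 4 * b)
                     & kummer A B d P = dd * t]].
Proof.
have [b0 vb] := ub; have [c0 vc] := uc; have [t20 vt2] := u2; have [d0 vd] := ud.
case: P => [[x y]|] /=; last by move=> _; apply: Or41; apply: sq_refl.
move/onE => hc.
have [x0|x0] := eqVneq x 0.
  apply: Or42; rewrite intrM rmorphB /= !rmorphXn /= intrM.
  by exists dd; split => //; ring.
set Q := x ^+ 2 - 2 * (dd * a) * x + dd ^+ 2 * c.
have hQ : y ^+ 2 = x * Q by rewrite hc /Q; ring.
have [y0|y0] := eqVneq y 0.
  have Q0 : Q = 0.
    move: hQ; rewrite y0 expr0n /= => /esym /eqP; rewrite mulf_eq0 (negbTE x0) /=.
    by move/eqP.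
  have e : (x - dd * a) ^+ 2 = 4 * dd ^+ 2 * b.
    by apply/eqP; rewrite -subr_eq0 -Q0 /Q; apply/eqP; ring.
  apply: Or43; exists ((x - dd * a) / (2 * dd)).
    by rewrite expr_div_n e; field; apply/andP.
  by field; apply/andP.
have Q0 : Q != 0.
  by apply: contra y0 => /eqP Q0; move: hQ; rewrite Q0 mulr0 => /eqP; rewrite expf_eq0.
have hx : sqclass x Q.
  exists (y / Q); split; first by rewrite mulf_neq0 // invr_eq0.
  by rewrite expr_div_n hQ; field.
have hdd : vge v 1 dd by right; rewrite vd.
have h2a : vge v 1 (- 2 * (dd * a)).
  rewrite -[1]add0r; apply: vgeM; first by apply: vgeN; apply: vge_nat.
  by rewrite -[1]addr0; apply: vgeM => //; exact: (vge_int A).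
have hc2 : vge v 2 (dd ^+ 2 * c).
  rewrite -[2]addr0; apply: vgeM; last by right; rewrite vc.
  by right; rewrite vX // vd.
case: (ltgtP (v x) 1) => hv.
- set w := (- 2 * (dd * a) * x + dd ^+ 2 * c) * (x ^-1) ^+ 2.
  have eQ : Q = x ^+ 2 * (1 + w) by rewrite /Q /w; field.
  have hw : vge v 1 w.
    apply: (vgeW (M := (1 + v x) + 2%:Z * (- v x))); first by move: (v x) hv => k; lia.
    apply: vgeM.
      apply: vgeD; first by apply: vgeM => //; exact: vge_v.
      by apply: vgeW hc2; move: (v x) hv => k; lia.
    by right; rewrite vX ?invr_eq0 // vV.
  have hw1 : sqclass (1 + w) 1 by apply: close (oner_neq0 K) v1 _; rewrite addrC addKr.
  apply: Or41; apply: sq_trans hx _; rewrite eQ.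
  suff : sqclass (x ^+ 2 * (1 + w)) (1 * 1) by rewrite mulr1.
  apply: sq_mul; first by apply: (sq_sq1 (z := x)).
  exact: hw1.
- set w := (x ^+ 2 - 2 * (dd * a) * x) * (dd ^+ 2 * c)^-1.
  have eQ : Q = dd ^+ 2 * c * (1 + w) by rewrite /Q /w; field; rewrite c0 d0.
  have hw : vge v 1 w.
    apply: (vgeW (M := 3 + (- 2))) => //.
    apply: vgeM.
      apply: vgeB.
        by right; rewrite vX //; move: (v x) hv => k; lia.
      apply: (vgeW (M := 1 + v x)); first by move: (v x) hv => k; lia.
      apply: vgeM; last exact: vge_v.
      rewrite -[1]add0r; apply: vgeM; first exact: vge_nat.
      by rewrite -[1]addr0; apply: vgeM => //; exact: (vge_int A).
    right; rewrite vV ?mulf_neq0 ?expf_neq0 // vM ?expf_neq0 // vX // vd vc.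
    by [].
  have hw1 : sqclass (1 + w) 1 by apply: close (oner_neq0 K) v1 _; rewrite addrC addKr.
  apply: Or42; apply: sq_trans hx _; rewrite eQ.
  suff : sqclass (dd ^+ 2 * c * (1 + w)) (1 * c * 1) by rewrite mul1r mulr1.
  apply: sq_mul; last exact: hw1.
  apply: sq_mul; last by apply: sq_refl.
  by apply: (sq_sq1 (z := dd)) => //.
- set t := x / dd.
  have t0 : t != 0 by rewrite mulf_neq0 // invr_eq0.
  have vt : v t = 0 by rewrite vM ?invr_eq0 // vV // hv vd.
  set R := (t - a) ^+ 2 - 4 * b.
  have eQ : Q = dd ^+ 2 * R by rewrite /Q /R /t; field.
  have R0 : R != 0 by apply: contra Q0 => /eqP R0; rewrite eQ R0 mulr0.
  have hR : vge v 0 R.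
    have hta : vge v 0 (t - a) by apply: vgeB; [exact: vge_unit | exact: (vge_int A)].
    apply: vgeB; first by rewrite -[0]addr0; apply: vgeM.
    rewrite -[0]addr0; apply: vgeM; [exact: vge_nat | exact: (vge_int B)].
  have hR1 : vge v 1 R.
    right; have := vge_nz R0 hR.
    have y2 : v (y ^+ 2) = v (y ^+ 2) by [].
    rewrite {2}hQ eQ vX // vM ?mulf_neq0 ?expf_neq0 // vM ?expf_neq0 // vX // hv vd in y2.
    move: (v y) (v R) y2 => k l; lia.
  apply: Or44; exists t; split => //.
  by rewrite /t; field.
Qed.

Lemma prod_vge1 x y : vge v 0 x -> vge v 0 y -> vge v 1 (x * y) -> vge v 1 x \/ vge v 1 y.
Proof.
have [->|x0] := eqVneq x 0; first by left; left.
have [->|y0] := eqVneq y 0; first by right; left.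
move=> /(vge_nz x0) hx /(vge_nz y0) hy /(vge_nz (mulf_neq0 x0 y0)); rewrite vM // => hxy.
case: (leP 1 (v x)) => h1; first by left; right.
by right; right; move: (v x) (v y) hx hy h1 hxy => k l; lia.
Qed.

Lemma vs_int s : s ^+ 2 = b -> s != 0 /\ v s = 0.
Proof.
move=> hs; have [b0 vb] := ub.
have s0 : s != 0 by apply: contra b0 => /eqP s0; rewrite -hs s0 expr0n.
by split => //; apply: i2z; rewrite -vb -hs vX.
Qed.

Lemma s_facts s : s ^+ 2 = b ->
  [/\ a + 2 * s != 0, v (a + 2 * s) = 0, a - 2 * s != 0, v (a - 2 * s) = 0
    & sqclass (c * (dd * (a + 2 * s))) (dd * (a - 2 * s))].
Proof.
move=> hs; have [s0 vs] := vs_int hs.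
have [c0 vc] := uc.
have es : (a + 2 * s) * (a - 2 * s) = c by rewrite -hs; ring.
have ap0 : a + 2 * s != 0 by apply: contra c0 => /eqP e; rewrite -es e mul0r.
have am0 : a - 2 * s != 0 by apply: contra c0 => /eqP e; rewrite -es e mulr0.
have h2s : vge v 0 (2 * s) by rewrite -[0]addr0; apply: vgeM; [exact: vge_nat | right; rewrite vs].
have hp := vge_nz ap0 (vgeD (vge_int A) h2s).
have hm := vge_nz am0 (vgeB (vge_int A) h2s).
have vpm : v (a + 2 * s) + v (a - 2 * s) = 0 by rewrite -vM // es.
have vp0 : v (a + 2 * s) = 0 by move: (v (a + 2 * s)) (v (a - 2 * s)) hp hm vpm => k l; lia.
have vm0 : v (a - 2 * s) = 0 by move: (v (a + 2 * s)) (v (a - 2 * s)) hp hm vpm => k l; lia.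
split => //.
exists (a + 2 * s); split => //.
by rewrite -es; ring.
Qed.

Lemma pt_on s : s ^+ 2 = b -> on_Edual A B d (Some (dd * (a + 2 * s), 0)).
Proof. by move=> hs; apply/onE; rewrite -hs; ring. Qed.

Lemma pt_kum s : s ^+ 2 = b -> kummer A B d (Some (dd * (a + 2 * s), 0)) = dd * (a + 2 * s).
Proof.
move=> hs; have [ap0 _ _ _ _] := s_facts hs; have [d0 _] := ud.
by rewrite /kummer (negbTE (mulf_neq0 d0 ap0)).
Qed.

Lemma no_c_d : ~ legendre_one p (disc' A B) -> forall P, on_Edual A B d P ->
  sqclass (kummer A B d P) 1 \/ sqclass (kummer A B d P) c.
Proof.
move=> nl P hP; case: (fwd hP) => [h|h|[s' hs' _]|[t [t0 vt hR _]]].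
- by left.
- by right.
- exfalso; have [s0 vs] := vs_int hs'.
  apply: (no_b_sq nl (m := 2 * s')).
    by rewrite -[0]addr0; apply: vgeM; [exact: vge_nat | right; rewrite vs].
  have -> : (2 * s') ^+ 2 - 4 * b = 0 by rewrite -hs'; ring.
  by left.
- exfalso; apply: (no_b_sq nl (m := t - a)) => //.
  by apply: vgeB; [exact: vge_unit | exact: (vge_int A)].
Qed.

Lemma norm_x x : x != 0 -> exists z, z != 0 /\ (v (x * z ^+ 2) = 0 \/ v (x * z ^+ 2) = 1).
Proof.
have [d0 vd] := ud.
suff H : forall n x, x != 0 -> (`|v x| <= n)%N ->
   exists z, z != 0 /\ (v (x * z ^+ 2) = 0 \/ v (x * z ^+ 2) = 1).
  by move=> x0; apply: (H _ x x0).
elim=> [|n IH] y y0 hn.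
  exists 1; split; first exact: oner_neq0.
  by left; rewrite expr1n mulr1; move: (v y) hn => k; lia.
case: (leP 0 (v y)) => h0.
  case: (leP (v y) 1) => h1.
    exists 1; split; first exact: oner_neq0.
    by rewrite expr1n mulr1; move: (v y) h0 h1 => k; lia.
  have y'0 : y * (dd^-1) ^+ 2 != 0 by rewrite mulf_neq0 ?expf_neq0 ?invr_eq0.
  have vy' : v (y * (dd^-1) ^+ 2) = v y - 2 by rewrite vM ?expf_neq0 ?invr_eq0 // vX ?invr_eq0 // vV // vd.
  have [|z [z0 hz]] := IH _ y'0; first by rewrite vy'; move: (v y) hn h1 => k; lia.
  exists (dd^-1 * z); split; first by rewrite mulf_neq0 // invr_eq0.
  by rewrite exprMn mulrA.
case: (eqVneq (v y) (-1)) => hm1.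
  exists dd; split => //; right.
  by rewrite vM ?expf_neq0 // vX // hm1 vd.
have y'0 : y * dd ^+ 2 != 0 by rewrite mulf_neq0 ?expf_neq0.
have vy' : v (y * dd ^+ 2) = v y + 2 by rewrite vM ?expf_neq0 // vX // vd.
have [|z [z0 hz]] := IH _ y'0.
  rewrite vy'; move: (v y) hn h0 hm1 => k; lia.
exists (dd * z); split; first by rewrite mulf_neq0.
by rewrite exprMn mulrA.
Qed.

Lemma T1 : type1 p A B -> forall s : K, s ^+ 2 = b -> forall x : K, x != 0 ->
  (in_W A B d x <-> sqclass x 1 \/ sqclass x (dd * (a + 2 * s))).
Proof.
case=> l1 _ s hs x x0.
have [d0 vd] := ud; have [c0 vc] := uc.
have cs := c_sq l1.
have [s0 vs] := vs_int hs.
have [ap0 vap am0 vam hcm] := s_facts hs.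
have minus : sqclass (dd * (a - 2 * s)) (dd * (a + 2 * s)).
  apply: sq_trans (sq_sym hcm) _.
  suff : sqclass (c * (dd * (a + 2 * s))) (1 * (dd * (a + 2 * s))) by rewrite mul1r.
  by apply: sq_mul => //; apply: sq_refl.
split.
- case=> P [hP hxk]; case: (fwd hP) => [h|h|[s' hs' hk]|[t [t0 vt hR hk]]].
  + by left; apply: sq_trans hxk h.
  + by left; apply: sq_trans hxk (sq_trans h cs).
  + right; apply: sq_trans hxk _; rewrite hk.
    have : (s' - s) * (s' + s) = 0.
      have -> : (s' - s) * (s' + s) = s' ^+ 2 - s ^+ 2 by ring.
      by rewrite hs hs' subrr.
    move/eqP; rewrite mulf_eq0 => /orP [/eqP e | /eqP e].
      by rewrite (subr0_eq e); apply: sq_refl.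
    have -> : s' = - s by apply/eqP; rewrite -subr_eq0 opprK e.
    by rewrite mulrN.
  + right; apply: sq_trans hxk _; rewrite hk.
    have h2s : vge v 0 (2 * s) by rewrite -[0]addr0; apply: vgeM; [exact: vge_nat | right; rewrite vs].
    have ht : vge v 0 t by exact: vge_unit.
    have e : (t - (a + 2 * s)) * (t - (a - 2 * s)) = (t - a) ^+ 2 - 4 * b by rewrite -hs; ring.
    rewrite -e in hR.
    case: (prod_vge1 _ _ hR).
    * by apply: vgeB => //; apply: vgeD => //; exact: (vge_int A).
    * by apply: vgeB => //; apply: vgeB => //; exact: (vge_int A).
    * move=> h; have := close ap0 vap h => ht'.
      by apply: sq_mul => //; apply: sq_refl.
    * move=> h; have := close am0 vam h => ht'.
      apply: sq_trans minus.
      by apply: sq_mul => //; apply: sq_refl.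
- case=> h.
    by exists None; split.
  exists (Some (dd * (a + 2 * s), 0)); split; first exact: pt_on.
  by rewrite pt_kum.
Qed.

Lemma T2 : type2 p A B -> forall x : K, x != 0 -> (in_W A B d x <-> sqclass x 1).
Proof.
case=> l1 nl2 x x0; have cs := c_sq l1.
split.
  case=> P [hP hxk]; case: (no_c_d nl2 hP) => h.
    exact: sq_trans hxk h.
  exact: sq_trans hxk (sq_trans h cs).
by move=> h; exists None; split.
Qed.

Lemma T3 : type3 p A B -> forall x : K, x != 0 -> in_W A B d x.
Proof.
case=> nl1 l2 x x0.
have [s hs] := b_sq l2.
have hs' : (- s) ^+ 2 = b by rewrite sqrrN.
have [d0 vd] := ud; have [c0 vc] := uc.
have [s0 vs] := vs_int hs.
have [ap0 vap am0 vam hcm] := s_facts hs.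
have [z [z0 hz]] := norm_x x0.
set u := x * z ^+ 2 in hz.
have u0 : u != 0 by rewrite mulf_neq0 ?expf_neq0.
have hxu : sqclass x u.
  exists z^-1; split; first by rewrite invr_eq0.
  by rewrite /u -mulrA -exprMn mulfV // expr1n mulr1.
case: hz => hv.
  case: (unit_cls u0 hv nl1) => h.
    by exists None; split => //; apply: sq_trans hxu h.
  exists (Some (0, 0)); split; first by apply/onE; ring.
  rewrite kumE; apply: sq_trans hxu (sq_trans h _).
  exists dd^-1; split; first by rewrite invr_eq0.
  by field.
set m := dd * (a + 2 * s).
have m0 : m != 0 by rewrite mulf_neq0.
have vm : v m = 1 by rewrite vM // vd vap addr0.
set u' := u / m.
have u'0 : u' != 0 by rewrite mulf_neq0 ?invr_eq0.
have vu' : v u' = 0 by rewrite vM ?invr_eq0 // vV // hv vm subrr.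
have eu : u = u' * m by rewrite /u' mulrAC -mulrA mulfV // mulr1.
case: (unit_cls u'0 vu' nl1) => h.
  exists (Some (m, 0)); split; first exact: pt_on.
  rewrite pt_kum //; apply: sq_trans hxu _; rewrite eu.
  suff : sqclass (u' * m) (1 * m) by rewrite mul1r.
  by apply: sq_mul => //; apply: sq_refl.
exists (Some (dd * (a + 2 * - s), 0)); split; first exact: pt_on.
rewrite pt_kum // mulrN; apply: sq_trans hxu _; rewrite eu.
apply: sq_trans hcm.
by apply: sq_mul => //; apply: sq_refl.
Qed.

Lemma T4 : type4 p A B -> forall x : K, x != 0 ->
  (in_W A B d x <-> exists u : K, u != 0 /\ v u = 0 /\ sqclass x u).
Proof.
case=> nl1 nl2 x x0.
have [d0 vd] := ud; have [c0 vc] := uc.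
split.
  case=> P [hP hxk]; case: (no_c_d nl2 hP) => h.
    exists 1; split; first exact: oner_neq0.
    by split; [exact: v1 | apply: sq_trans hxk h].
  by exists c; split => //; split => //; apply: sq_trans hxk h.
case=> u [u0 [vu hxu]].
case: (unit_cls u0 vu nl1) => h.
  by exists None; split => //; apply: sq_trans hxu h.
exists (Some (0, 0)); split; first by apply/onE; ring.
rewrite kumE; apply: sq_trans hxu (sq_trans h _).
exists dd^-1; split; first by rewrite invr_eq0.
by field.
Qed.

End Val.

Unset Implicit Arguments.

Theorem corollary3p4 (A B d : int) (p : nat) (K : fieldType) (v : K -> int) :
  two_torsion_Z2 A B ->
  squarefree_int d ->
  prime p ->
  (p%:Z %| d)%Z ->
  coprime p `|(2 * disc A B)%R|%N ->
  is_Qp p v ->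
  [/\ (type1 p A B ->
        forall s : K, s ^+ 2 = B%:~R ->
        forall x : K, x != 0 ->
          (in_W A B d x <-> sqclass x 1 \/ sqclass x (d%:~R * (A%:~R + 2 * s)))),
      (type2 p A B ->
        forall x : K, x != 0 -> (in_W A B d x <-> sqclass x 1)),
      (type3 p A B ->
        forall x : K, x != 0 -> in_W A B d x) &
      type4 p A B ->
        forall x : K, x != 0 ->
          (in_W A B d x <-> exists u : K, u != 0 /\ v u = 0 /\ sqclass x u)].
Proof.
move=> _ sqf pp hpd cop HQ.
split.
- exact: (@T1 A B d p K v pp HQ hpd sqf cop).
- exact: (@T2 A B d p K v pp HQ hpd sqf cop).
- exact: (@T3 A B d p K v pp HQ hpd sqf cop).
- exact: (@T4 A B d p K v pp HQ hpd sqf cop).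
Qed.
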